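(* Let $n\ge3$. Then $d'_{L_n^2}=n-\left\lceil\frac n5\right\rceil$.
   Context: $L_n^2$ is the graph on $\{1,\dots,n\}$ with edges $\{i,i+1\}$ and $\{i,i+2\}$. A bouquet in a graph $G$ is a subgraph that is a star with vertex set $\{w,z_1,\dots,z_t\}$, $t\ge1$, and edges $\{w,z_i\}$ (all edges of $G$); $w$ is its root and $z_1,\dots,z_t$ its flowers. A set $\mathcal B=\{B_1,\dots,B_r\}$ of bouquets of $G$ is semi-strongly disjoint if $V(B_i)\cap V(B_j)=\emptyset$ for $i\ne j$ and no two roots of bouquets in $\mathcal B$ are adjacent in $G$. $\mathcal F(\mathcal B)$ denotes the set of all flowers of bouquets in $\mathcal B$, and $d'_G=\max\{|\mathcal F(\mathcal B)|:\mathcal B$ a semi-strongly disjoint set of bouquets of $G\}$. *)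

(* Defs.v *)
From mathcomp Require Import all_boot.
Set Implicit Arguments. Unset Strict Implicit. Unset Printing Implicit Defensive.

(* L_n^2 : vertices 1..n are represented by 'I_n (vertex k+1 <-> ordinal k);
   edges {i,i+1} and {i,i+2}. *)
Definition L2rel (n : nat) : rel 'I_n :=
  fun i j => [|| i.+1 == j :> nat, j.+1 == i :> nat,
                 i.+2 == j :> nat | j.+2 == i :> nat].

Arguments L2rel : clear implicits.

(* A bouquet is given by its root w and its set of flowers Z:
   Z nonempty, w not in Z, and every flower adjacent to w in G. *)
Definition bouquet (T : finType) (e : rel T) (b : T * {set T}) : bool :=
  [&& b.1 \notin b.2, b.2 != set0 & [forall z in b.2, e b.1 z]].

Definition bverts (T : finType) (b : T * {set T}) : {set T} := b.1 |: b.2.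

Definition semi_strong (T : finType) (e : rel T) (B : {set T * {set T}}) : bool :=
  [forall b in B, bouquet e b] &&
  [forall b in B, forall c in B,
     (b != c) ==> ([disjoint bverts b & bverts c] && ~~ e b.1 c.1)].

Definition nflowers (T : finType) (B : {set T * {set T}}) : nat :=
  #|\bigcup_(b in B) b.2|.

Definition dprime (T : finType) (e : rel T) : nat :=
  \max_(B : {set T * {set T}} | semi_strong e B) nflowers B.

(* Main.v *)
Require Import Defs.
From mathcomp Require Import all_boot.
From mathcomp Require Import zify.

Lemma ord_inord (n' : nat) (z : 'I_n'.+1) x : val z = x -> z = inord x.
Proof. by move=> <-; rewrite inord_val. Qed.

Lemma nb_card (n' : nat) (w : 'I_n'.+1) (Z : {set 'I_n'.+1}) :
  [forall z in Z, L2rel n'.+1 w z] -> #|Z| <= 4.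
Proof.
move/forall_inP=> H.
have sub : Z \subset mem [:: inord w.+1; inord (w - 1); inord w.+2; inord (w - 2)].
  apply/subsetP=> z /H; rewrite /L2rel => /or4P [] /eqP h; rewrite !inE.
  - rewrite (_ : z = inord w.+1) ?eqxx ?orbT //; apply: val_inj; rewrite /= inordK //; move: (ltn_ord z); lia.
  - rewrite (_ : z = inord (w - 1)) ?eqxx ?orbT //; apply: val_inj; rewrite /= inordK //; move: (ltn_ord z); lia.
  - rewrite (_ : z = inord w.+2) ?eqxx ?orbT //; apply: val_inj; rewrite /= inordK //; move: (ltn_ord z); lia.
  - rewrite (_ : z = inord (w - 2)) ?eqxx ?orbT //; apply: val_inj; rewrite /= inordK //; move: (ltn_ord z); lia.
by apply: leq_trans (subset_leq_card sub) (card_size _).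
Qed.

Lemma upper (n' : nat) (B : {set 'I_n'.+1 * {set 'I_n'.+1}}) :
  semi_strong (L2rel n'.+1) B -> nflowers B <= n'.+1 - (n'.+1 + 4) %/ 5.
Proof.
case/andP=> /forall_inP Hb /forall_inP Hd.
set F := \bigcup_(b in B) b.2.
set R := [set b.1 | b in B].
have cR : #|R| = #|B|.
  apply: card_in_imset => b c bB cB eq1.
  apply/eqP; apply/negPn/negP=> ne.
  move: (Hd b bB) => /forall_inP /(_ c cB) /implyP /(_ ne) /andP [dj _].
  move/disjoint_setI0: dj => /setP /(_ b.1).
  by rewrite !inE eq1 eqxx.
have dFR : F :&: R = set0.
  apply/setP=> x; rewrite !inE; apply/negP=> /andP [/bigcupP [b bB xb] /imsetP [c cB xc]].
  case: (eqVneq b c) => [ebc|ne].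
    by move: (Hb b bB) => /and3P [nb _ _]; move: nb; rewrite ebc -xc -ebc xb.
  move: (Hd b bB) => /forall_inP /(_ c cB) /implyP /(_ ne) /andP [dj _].
  move/disjoint_setI0: dj => /setP /(_ x).
  by rewrite !inE xb -xc eqxx orbT.
have sFR : #|F| + #|R| <= n'.+1.
  have := cardsU F R; rewrite dFR cards0 subn0 => <-.
  by have := max_card (mem (F :|: R)); rewrite card_ord.
have F4 : #|F| <= 4 * #|B|.
  have : #|F| <= \sum_(b in B) #|b.2|.
    rewrite /F; elim/big_rec2: _ => [|b m U bB le]; first by rewrite cards0.
    by rewrite (leq_trans (leq_card_setU b.2 U).1) ?leq_add2l.
  move/leq_trans; apply.
  rewrite mulnC -sum_nat_const; apply: leq_sum => b bB.
  by move: (Hb b bB) => /and3P [_ _ /nb_card].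
rewrite /nflowers -/F; rewrite cR in sFR. move: sFR F4. move: #|F| #|B| => a b. have := divn_eq (n'.+1+4) 5. have := ltn_pmod (n'.+1+4) (isT : 0 < 5). lia.
Qed.


Section Low.
Variable n' : nat.
Local Notation N := n'.+1.
Local Notation m := ((N + 4) %/ 5).

Definition cc (k : nat) := 5 * k + minn 2 (N - 5 * k - 1).
Definition rt (k : 'I_m) : 'I_N := inord (cc k).
Definition fl (k : 'I_m) : {set 'I_N} :=
  [set j : 'I_N | (j %/ 5 == k) && (nat_of_ord j != cc k)].
Definition KK : {set 'I_m} := [set k : 'I_m | 2 <= N - 5 * k].
Definition BB : {set 'I_N * {set 'I_N}} := [set (rt k, fl k) | k in KK].
Definition CC : {set 'I_N} := [set rt k | k : 'I_m].

Lemma rtE (k : 'I_m) : nat_of_ord (rt k) = cc k.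
Proof. rewrite /rt /= inordK // /cc; move: (ltn_ord k); lia. Qed.

Lemma BB_ss : semi_strong (L2rel N) BB.
Proof.
apply/andP; split.
  apply/forall_inP => b /imsetP [k kK ->]; move: kK; rewrite inE => kK.
  apply/and3P; split => /=.
  - by rewrite inE rtE eqxx andbF.
  - apply/set0Pn; exists (inord (5 * k)); rewrite inE /= inordK; last by move: (ltn_ord k); lia.
    rewrite /cc; apply/andP; split; apply/eqP; lia.
  - apply/forall_inP => z; rewrite inE => /andP [/eqP h1 /eqP h2].
    rewrite /L2rel rtE /cc; move: (ltn_ord z) h1 h2; rewrite /cc. lia.
apply/forall_inP => b /imsetP [k1 k1K ->]; apply/forall_inP => c /imsetP [k2 k2K ->].
move: k1K k2K; rewrite !inE => k1K k2K.
apply/implyP => ne.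
have nk : nat_of_ord k1 != nat_of_ord k2.
  by apply: contraNneq ne => /val_inj ->.
apply/andP; split; last first.
  by rewrite /L2rel /= !rtE /cc; move: nk; lia.
rewrite disjoints_subset; apply/subsetP => x; rewrite /bverts /= !inE => H1; apply/negP => H2; move: H1 H2 => /orP [/eqP -> | /andP [/eqP h1 _]] /orP [/eqP e | /andP [/eqP h2 _]].
- by move: (f_equal (@nat_of_ord _) e); rewrite !rtE /cc; move: nk; lia.
- by move: h2; rewrite rtE /cc; move: nk; lia.
- by move: h1; rewrite e rtE /cc; move: nk; lia.
- by move: nk; rewrite -h1 -h2 eqxx.
Qed.

Lemma CC_card : #|CC| = m.
Proof.
rewrite card_imset ?card_ord // => k1 k2 e; apply: ord_inj.
by move: (f_equal (@nat_of_ord _) e); rewrite !rtE /cc; lia.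
Qed.

Lemma BB_flowers : nflowers BB = N - m.
Proof.
rewrite /nflowers.
have -> : \bigcup_(b in BB) b.2 = ~: CC.
  apply/setP => j; rewrite inE; apply/bigcupP/idP.
    case=> b /imsetP [k kK ->] /=; rewrite inE => /andP [/eqP h1 /eqP h2].
    apply/negP => /imsetP [k' _ e]; move: h1 h2; rewrite e rtE /cc; lia.
  move=> jC.
  have jm : j %/ 5 < m by move: (ltn_ord j); lia.
  have ne : forall k : 'I_m, val j = cc k -> False.
    by move=> k e; move: jC; rewrite (_ : j = rt k) ?imset_f //; apply: ord_inj; rewrite rtE.
  exists (rt (Ordinal jm), fl (Ordinal jm)).
    apply: imset_f; rewrite inE /=.
    have := ne (Ordinal jm); rewrite /cc /=; move: (ltn_ord j); lia.
  rewrite /= inE /=; apply/andP; split => //; apply/eqP => e.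
  exact: (ne (Ordinal jm) e).
have := cardsC CC; rewrite CC_card card_ord => h; rewrite -[X in _ = X - _]h addKn; reflexivity.
Qed.
End Low.

Theorem proposition4p3 (n : nat) (hn : 3 <= n) :
  dprime (L2rel n) = n - (n + 4) %/ 5.
Proof.
case: n hn => [//|n'] _.
apply/eqP; rewrite eqn_leq; apply/andP; split.
  apply/bigmax_leqP => B; exact: upper.
apply: (bigmax_sup (BB n')); first exact: BB_ss.
by rewrite BB_flowers.
Qed.
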